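(* Let $f:M\to M$ possess a CMZ structure and fix $\beta>0$. (b) If $\mu_Y(\sigma>n)=O(e^{-an})$ for some $a>0$ and $\mu_X(h>n)\ge cn^{-\beta}$ for some $c>0$ and all $n\ge1$, then there exists $c'>0$ such that $\mu_Y(\varphi>n)\ge c'(\log n)^{-1}n^{-\beta}$ for all sufficiently large $n$. For every $\varepsilon>0$ there exists $q>1$ (depending on $\beta,\varepsilon$) such that, if $\mu_Y(\sigma>n)=O(n^{-q})$, then: (c) if $\mu_X(h>n)=O(n^{-\beta})$ then $\mu_Y(\varphi>n)=O(n^{-(\beta-\varepsilon)})$; (d) if $\mu_X(h>n)\ge cn^{-\beta}$ for some $c>0$, then there exists $c'>0$ with $\mu_Y(\varphi>n)\ge c'n^{-(\beta+\varepsilon)}$ for all $n\ge1$.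
   Context: CMZ structure: $f:M\to M$ ergodic mixing measure-preserving on a probability space $(M,\mu)$; measurable $Y\subset X\subset M$, $\mu(Y)>0$; $h:X\to\mathbb Z^+$ the integrable first return time of $f$ to $X$, $f_X=f^h$, $\mu_X=\mu|_X/\mu(X)$; an integrable $\sigma:Y\to\mathbb Z^+$ constant on elements of a countable partition $\alpha$ such that $F=f_X^\sigma:Y\to Y$ is a full-branch Gibbs–Markov map with invariant probability $\mu_Y$; $f_X$ is modelled by the Young tower $Y^\sigma$ (the map $(y,\ell)\mapsto f_X^\ell y$, $0\le\ell<\sigma(y)$, pushes $(\mu_Y\times\text{counting})/\int\sigma\,d\mu_Y$ to $\mu_X$); $h$ is constant on $f_X^\ell(a)$ for $a\in\alpha$, $0\le\ell<\sigma(a)$; and $\varphi(y)=\sum_{\ell=0}^{\sigma(y)-1}h(f_X^\ell y)$ is the induced return time. *)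

(* Defs.v *)
From HB Require Import structures.
From mathcomp Require Import all_boot all_order all_algebra.
From mathcomp Require Import all_classical all_reals all_analysis.
Set Implicit Arguments. Unset Strict Implicit. Unset Printing Implicit Defensive.
Import Order.TTheory GRing.Theory Num.Theory.
Import numFieldNormedType.Exports.
Local Open Scope classical_set_scope.
Local Open Scope ring_scope.

Section CMZ.
Context {d : measure_display} {M : measurableType d} {R : realType}.

Definition first_return_map (f : M -> M) (h : M -> nat) : M -> M :=
  fun x => iter (h x) f x.

Definition induced_map (f : M -> M) (h : M -> nat) (sigma : M -> nat) : M -> M :=
  fun y => iter (sigma y) (first_return_map f h) y.

Definition induced_return_time (f : M -> M) (h : M -> nat) (sigma : M -> nat)
  : M -> nat :=
  fun y => (\sum_(l < sigma y) h (iter l (first_return_map f h) y))%N.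

Definition cond_measure (mu : probability M R) (X : set M) (A : set M) : \bar R :=
  (mu (A `&` X) * ((fine (mu X))^-1)%:E)%E.

Definition same_elem (alpha : set (set M)) (x y : M) : Prop :=
  exists2 a, alpha a & a x /\ a y.

(* F^k x and F^k y lie in the same partition element for all k < n,
   i.e. the separation time s(x,y) is at least n *)
Definition sep_ge (alpha : set (set M)) (F : M -> M) (n : nat) (x y : M) : Prop :=
  forall k, (k < n)%N -> same_elem alpha (iter k F x) (iter k F y).

Definition full_branch_GM (Y : set M) (alpha : set (set M)) (F : M -> M)
    (muY : probability M R) : Prop :=
  [/\
      [/\ countable alpha,
      (forall a, alpha a -> measurable a /\ (0 < muY a)%E),
      trivIset alpha id &
      \bigcup_(a in alpha) a = Y],
      muY (~` Y) = 0%E /\ (forall A, measurable A -> muY (F @^-1` A) = muY A),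
      (forall a, alpha a -> set_bij a Y F /\ measurable_fun a F) &
      (* Jacobian g = 1/zeta, zeta = d muY / d(muY o F), with log zeta
         locally Lipschitz for d_theta = theta^s *)
      exists g : M -> R,
        (forall y, 0 < g y) /\
        (forall a, alpha a -> forall E, measurable E -> E `<=` a ->
            measurable (F @` E) /\
            muY (F @` E) = (\int[muY]_(x in E) (g x)%:E)%E) /\
        exists (C theta : R), 0 < theta < 1 /\
          forall a, alpha a -> forall x y, a x -> a y -> forall n,
            sep_ge alpha F n x y ->
            `|ln (g x)^-1 - ln (g y)^-1| <= C * theta ^+ n ].

Definition CMZ (mu : probability M R) (f : M -> M) (X Y : set M) (h : M -> nat)
    (alpha : set (set M)) (sigma : M -> nat) (muY : probability M R) : Prop :=
  let fX := first_return_map f h in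
  [/\
      [/\ measurable_fun setT f, (forall A, measurable A -> mu (f @^-1` A) = mu A),
      (forall A, measurable A -> f @^-1` A = A -> mu A = 0%E \/ mu A = 1%E) &
      (forall A B, measurable A -> measurable B ->
         (fun n => fine (mu (iter n f @^-1` A `&` B))) @ \oo
           --> fine (mu A) * fine (mu B))],
      [/\ measurable X, measurable Y, Y `<=` X & (0 < mu Y)%E],
      (forall x, X x -> [/\ (0 < h x)%N, X (iter (h x) f x) &
                           forall k, (0 < k < h x)%N -> ~ X (iter k f x)]) /\
      (\int[mu]_(x in X) ((h x)%:R)%:E < +oo)%E,
      [/\ (forall y, Y y -> (0 < sigma y)%N),
          (forall a, alpha a -> forall x y, a x -> a y -> sigma x = sigma y),
          (\int[muY]_(y in Y) ((sigma y)%:R)%:E < +oo)%E &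
          full_branch_GM Y alpha (induced_map f h sigma) muY] &
      ((* the Young tower Y^sigma models f_X: the map (y,l) |-> f_X^l y pushes
         (muY x counting)/int sigma dmuY to mu_X *)
      (forall A, measurable A ->
         ((\int[muY]_(y in Y) ((sigma y)%:R)%:E) * cond_measure mu X A)%E =
         (\sum_(0 <= l <oo) muY [set y | Y y /\ (l < sigma y)%N /\ A (iter l fX y)])%E) /\
      (forall a, alpha a -> forall l x y, a x -> a y -> (l < sigma x)%N ->
          h (iter l fX x) = h (iter l fX y))) ].

End CMZ.

(* Main.v *)
Require Import Defs.
From HB Require Import structures.
From mathcomp Require Import all_boot all_order all_algebra.
From mathcomp Require Import all_classical all_reals all_analysis.
From mathcomp.algebra_tactics Require Import ring lra.
From mathcomp Require Import zify.
Import Order.TTheory GRing.Theory Num.Theory.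
Import numFieldNormedType.Exports.
Local Open Scope classical_set_scope.
Local Open Scope ring_scope.
Section Core.
Context {d : measure_display} {M : measurableType d} {R : realType}.
Context (mu : probability M R) (f : M -> M) (X Y : set M) (h : M -> nat)
  (alpha : set (set M)) (sigma : M -> nat) (muY : probability M R).
Context (HC : CMZ mu f X Y h alpha sigma muY).

Local Notation fX := (first_return_map f h).
Local Notation phi := (induced_return_time f h sigma).

Lemma fX_in_X l y : X y -> X (iter l fX y).
Proof.
move: HC; rewrite /CMZ /= => -[_ _ [hret _] _ _] Xy.
elim: l => //= l IH; rewrite /first_return_map.
by have [] := hret _ IH.
Qed.

Lemma sat_meas (S : set M) : S `<=` Y ->
  (forall a, alpha a -> forall x y, a x -> a y -> S x -> S y) -> measurable S.
Proof.
move: HC; rewrite /CMZ /= => -[_ _ _ [_ _ _ [[cnt amu _ aY] _ _ _]] _] SY sat.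
have [g ginj] := countable_injP _ cnt.
pose F n := \bigcup_(a in [set a | alpha a /\ g a = n /\ a `<=` S]) a.
have -> : S = \bigcup_n F n.
  apply/seteqP; split; last first.
    move=> x [n _ [a [aa [_ aS]] ax]]; exact: (aS x ax).
  move=> x Sx.
  have : Y x by exact: SY.
  rewrite -aY => -[a aa ax].
  exists (g a) => //; exists a; last exact: ax.
  split; first exact: aa. split; first by []. move=> y ay.
  exact: (sat a aa x y ax ay Sx).
apply: bigcupT_measurable => n.
have [[a0 [a0a [g0 a0S]]]|nex] := pselect (exists a, alpha a /\ g a = n /\ a `<=` S).
  have -> : F n = a0; last exact: (amu a0 a0a).1.
  apply/seteqP; split => [x [a [aa [ga aS]] ax]|x ax]; last by exists a0.
  have -> : a0 = a; last by [].
  apply: ginj; rewrite ?inE //; by rewrite ga g0.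
have -> : F n = set0; last exact: measurable0.
apply/seteqP; split => [x [a Pa _]|x //]; exfalso; apply: nex; by exists a.
Qed.

Local Notation s := (\int[muY]_(y in Y) ((sigma y)%:R)%:E)%E.
Definition Tset m l := [set y | Y y /\ (l < sigma y)%N /\
   ([set x | (m < h x)%N] `&` X) (iter l fX y)].
Definition Sig L := [set y | Y y /\ (L < sigma y)%N].
Definition Pset n := [set y | Y y /\ (n < phi y)%N].

Lemma iter_meas k : measurable_fun setT (iter k f).
Proof.
move: HC; rewrite /CMZ /= => -[[mf _ _ _] _ _ _ _].
elim: k => [|k IH] /=; first exact: measurable_id.
exact: measurableT_comp mf IH.
Qed.

Lemma A_meas m : measurable ([set x | (m < h x)%N] `&` X).
Proof.
move: HC; rewrite /CMZ /= => -[_ [mX _ _ _] [hret _] _ _].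
have -> : [set x | (m < h x)%N] `&` X =
  X `&` \bigcap_(k in [set k | (0 < k <= m)%N]) ((iter k f) @^-1` (~` X)).
  apply/seteqP; split.
  - move=> x [mh Xx]; split => // k /= /andP[k0 km].
    have [_ _ nr] := hret x Xx; apply: nr.
    by rewrite k0 /=; exact: leq_ltn_trans km mh.
  - move=> x [Xx H]; split => //=; rewrite ltnNge; apply/negP => hm.
    have [h0 Xr _] := hret x Xx.
    by apply: (H (h x)) => //=; rewrite h0 hm.
apply: measurableI => //; apply: bigcap_measurableType => k _.
rewrite -[X in measurable X]setTI; apply: (iter_meas k) => //.
exact: measurableC.
Qed.

Lemma Y_sub_X : Y `<=` X.
Proof. by move: HC; rewrite /CMZ /= => -[_ [_ _ YX _] _ _ _]. Qed.

Lemma alpha_sub {a} : alpha a -> a `<=` Y.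
Proof.
move: HC; rewrite /CMZ /= => -[_ _ _ [_ _ _ [[_ _ _ aY] _ _ _]] _] aa x ax.
by rewrite -aY; exists a.
Qed.

Lemma Sig_meas L : measurable (Sig L).
Proof.
move: HC; rewrite /CMZ /= => -[_ _ _ [_ sigc _ _] _].
apply: sat_meas => [x [] //|a aa x y ax ay [_ Lx]].
by split; [exact: alpha_sub ay | rewrite (sigc a aa y x ay ax)].
Qed.

Lemma T_meas m l : measurable (Tset m l).
Proof.
move: HC; rewrite /CMZ /= => -[_ _ _ [_ sigc _ _] [_ hc]].
apply: sat_meas => [x [] //|a aa x y ax ay [_ [lx [mx _]]]].
have Yy := alpha_sub aa y ay.
split => //; split; first by rewrite (sigc a aa y x ay ax).
split; last by apply: fX_in_X; exact: Y_sub_X.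
by rewrite /= -(hc a aa l x y ax ay lx).
Qed.

Lemma phi_sat {a} : alpha a -> forall x y, a x -> a y -> phi x = phi y.
Proof.
move: HC; rewrite /CMZ /= => -[_ _ _ [_ sigc _ _] [_ hc]] aa x y ax ay.
rewrite /induced_return_time.
have e := sigc a aa x y ax ay.
rewrite -(big_mkord xpredT (fun l => h (iter l fX x))).
rewrite -(big_mkord xpredT (fun l => h (iter l fX y))) -e.
by apply: eq_big_nat => i /andP[_ ilt]; apply: (hc a).
Qed.

Lemma P_meas n : measurable (Pset n).
Proof.
apply: sat_meas => [x [] //|a aa x y ax ay [_ nx]].
by split; [exact: alpha_sub ay | rewrite -(phi_sat aa x y ax ay)].
Qed.

Lemma key_tower m : (s * cond_measure mu X [set x | (m < h x)%N])%E =
  (\sum_(0 <= l <oo) muY (Tset m l))%E.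
Proof.
move: HC; rewrite /CMZ /= => -[_ _ _ _ [tower _]].
rewrite -tower; last exact: A_meas.
by rewrite /cond_measure -setIA setIid.
Qed.

Lemma muY_Y : muY Y = 1%E.
Proof.
move: HC; rewrite /CMZ /= => -[_ [_ mY _ _] _ [_ _ _ [_ [muYc _] _ _]] _].
rewrite -(probability_setT muY) -(setUv Y) measureU//=.
- by rewrite muYc adde0.
- exact: measurableC.
- by rewrite setICr.
Qed.

Lemma s_fin : s \is a fin_num.
Proof.
move: HC; rewrite /CMZ /= => -[_ _ _ [_ _ sint _] _].
rewrite ge0_fin_numE ?sint//; apply: integral_ge0 => y _; exact: lee0n.
Qed.

Lemma s_ge1 : (1 <= s)%E.
Proof.
move: HC; rewrite /CMZ /= => -[_ [mX mY YX muY0] _ [sig0 _ _ _] [tower _]].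
have := tower setT measurableT.
have muXfin : mu X \is a fin_num by exact: fin_num_measure.
have muX0 : (0 < mu X)%E.
  by apply: (lt_le_trans muY0); apply: le_measure => //; rewrite inE.
have -> : cond_measure mu X setT = 1%E.
  rewrite /cond_measure setTI -[in X in (X * _)%E](fineK muXfin) -EFinM mulfV //.
  by rewrite gt_eqF // fine_gt0 // muX0 /= ltey_eq muXfin.
rewrite mule1 => ->.
apply: le_trans (@nneseries_lim_ge _ _ xpredT 0 1 _) => //.
rewrite big_nat1 -muY_Y.
apply: le_measure; rewrite ?inE //.
  apply: sat_meas => [x [] //|a aa x y ax ay _]; split; first exact: alpha_sub aa y ay.
  by split => //; apply: sig0; exact: alpha_sub aa y ay.
by move=> y Yy; split => //; split => //; exact: sig0.
Qed.

Lemma Tsub_P m l : Tset m l `<=` Pset m.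
Proof.
move=> y [Yy [lt [mh _]]]; split => //.
rewrite /induced_return_time (bigD1 (Ordinal lt)) //=.
exact: leq_trans mh (leq_addr _ _).
Qed.

Lemma LB m L B : (\sum_(L <= l <oo) muY (Sig l) <= B)%E ->
  (s * cond_measure mu X [set x | (m < h x)%N] <= L%:R%:E * muY (Pset m) + B)%E.
Proof.
move=> HB; rewrite key_tower (nneseries_split 0 L); last by move=> *; exact: measure_ge0.
rewrite add0n; apply: leeD.
  have Pfin : muY (Pset m) \is a fin_num by apply: fin_num_measure; exact: P_meas.
  apply: (@le_trans _ _ (\sum_(0 <= k < L) muY (Pset m))%E).
    apply: lee_sum => k _; apply: le_measure; rewrite ?inE; [exact: T_meas|exact: P_meas|exact: Tsub_P].
  rewrite -(fineK Pfin) sumEFin sumr_const_nat subn0 -EFinM mulr_natl //.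
apply: le_trans HB; apply: lee_nneseries => [k _ _|k _]; first exact: measure_ge0.
apply: le_measure; rewrite ?inE; [exact: T_meas|exact: Sig_meas|].
by move=> y [Yy [lt _]].
Qed.

Lemma UB n L : (0 < L)%N ->
  (muY (Pset n) <= muY (Sig L) + s * cond_measure mu X [set x | (n %/ L < h x)%N])%E.
Proof.
move=> L0; rewrite key_tower.
have mU : measurable (\bigcup_l Tset (n %/ L) l) by apply: bigcupT_measurable => l; exact: T_meas.
apply: (@le_trans _ _ (muY (Sig L `|` \bigcup_l Tset (n %/ L) l))).
  apply: le_measure; rewrite ?inE; [exact: P_meas|apply: measurableU => //; exact: Sig_meas|].
  move=> y [Yy ny].
  have [Ls|sL] := ltnP L (sigma y); first by left.
  right.
  case: (pselect (exists l : 'I_(sigma y), (n %/ L < h (iter l fX y))%N)) => [[l hl]|nex].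
    exists (nat_of_ord l) => //; split => //; split; first exact: ltn_ord.
    by split => //; apply: fX_in_X; exact: Y_sub_X.
  exfalso; move: ny; apply/negP; rewrite -leqNgt.
  apply: (@leq_trans (\sum_(i < sigma y) (n %/ L))%N).
    apply: leq_sum => i _; rewrite leqNgt; apply/negP => hi; apply: nex; by exists i.
  rewrite sum_nat_const card_ord.
  apply: leq_trans (leq_trunc_div n L); rewrite mulnC; exact: leq_mul.
apply: le_trans (measureU2 _ _ _) _; [exact: Sig_meas|exact: mU|].
apply: leeD2l; apply: generalized_Boole_inequality => // l; exact: T_meas.
Qed.

Lemma P_anti n n' : (n <= n')%N -> (muY (Pset n') <= muY (Pset n))%E.
Proof.
move=> nn; apply: le_measure; rewrite ?inE; [exact: P_meas|exact: P_meas|].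
by move=> y [Yy lt]; split => //; exact: leq_ltn_trans nn lt.
Qed.

Lemma cond_ge0 A : measurable A -> (0 <= cond_measure mu X A)%E.
Proof.
move=> _; rewrite /cond_measure; apply: mule_ge0; first exact: measure_ge0.
by rewrite lee_fin invr_ge0 fine_ge0 // measure_ge0.
Qed.

Lemma LBr m L B v : (\sum_(L <= l <oo) muY (Sig l) <= B%:E)%E -> 0 <= v ->
  (v%:E <= cond_measure mu X [set x | (m < h x)%N])%E ->
  v <= L%:R * fine (muY (Pset m)) + B.
Proof.
move=> HB v0 hv; have hv2 := hv.
have Pfin : muY (Pset m) \is a fin_num by apply: fin_num_measure; exact: P_meas.
have h2 := LB m L _ HB; rewrite -(fineK Pfin) -EFinM -EFinD in h2.
rewrite -lee_fin; apply: le_trans h2; apply: le_trans hv _.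
apply: lee_pemull; last exact: s_ge1.
by apply: le_trans hv2; rewrite lee_fin.
Qed.

Lemma UBr n L KH : (0 < L)%N ->
  (cond_measure mu X [set x | (n %/ L < h x)%N] <= KH%:E)%E ->
  fine (muY (Pset n)) <= fine (muY (Sig L)) + fine s * KH.
Proof.
move=> L0 hK.
have Pfin : muY (Pset n) \is a fin_num by apply: fin_num_measure; exact: P_meas.
have Sfin : muY (Sig L) \is a fin_num by apply: fin_num_measure; exact: Sig_meas.
have := @UB n L L0.
move=> h1; rewrite -lee_fin EFinD EFinM !fineK //; last exact: s_fin.
apply: (le_trans h1); apply: leeD2l; apply: lee_wpmul2l => //.
by apply: le_trans s_ge1; rewrite lee_fin.
Qed.

Lemma p_anti n n' : (n <= n')%N -> fine (muY (Pset n')) <= fine (muY (Pset n)).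
Proof.
move=> nn; apply: fine_le; try (apply: fin_num_measure; exact: P_meas).
exact: P_anti.
Qed.

Lemma P_fin n : muY (Pset n) \is a fin_num.
Proof. by apply: fin_num_measure; exact: P_meas. Qed.

Lemma Sig_fin n : muY (Sig n) \is a fin_num.
Proof. by apply: fin_num_measure; exact: Sig_meas. Qed.

End Core.
Lemma powRE (R : realType) (a x : R) : 0 < a -> a `^ x = expR (x * ln a).
Proof. by move=> a0; rewrite /powR gt_eqF. Qed.

Lemma tail_tele (R : realType) (u : nat -> \bar R) (w : nat -> R) L :
  (forall l, (L <= l)%N -> (0 <= u l)%E /\ (u l <= (w l - w l.+1)%:E)%E) ->
  (forall l, (L <= l)%N -> 0 <= w l) ->
  (\sum_(L <= l <oo) u l <= (w L)%:E)%E.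
Proof.
move=> Hu Hw; apply: lime_le.
  by apply: is_cvg_ereal_nneg_natsum => l Ll; case: (Hu l Ll).
apply: nearW => n.
have [nL|Ln] := leqP n L.
  by rewrite big_geq // lee_fin Hw.
have key : forall k, (\sum_(L <= l < L + k) u l <= (w L - w (L + k)%N)%:E)%E.
  elim=> [|k IH].
    by rewrite big_geq ?addn0 // subrr.
  rewrite addnS big_nat_recr /= ?leq_addr //.
  apply: le_trans (leeD IH (Hu _ (leq_addr _ _)).2) _.
  by rewrite -EFinD lee_fin addrA subrK.
rewrite -(subnKC (ltnW Ln)); apply: le_trans (key _) _.
by rewrite lee_fin lerBlDr lerDl Hw // leq_addr.
Qed.
Lemma nat_gt_of (R : realType) (y : R) (n : nat) :
  ((Num.truncn y).+1 <= n)%N -> y < n%:R.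
Proof.
move=> h; have [y0|y0] := leP 0 y.
  by apply: lt_le_trans (truncnS_gt y) _; rewrite ler_nat.
by apply: lt_le_trans y0 _; rewrite ler0n.
Qed.

Lemma pure_b (R : realType) (a beta c K1 : R) (N : nat) (p : nat -> R) :
  0 < a -> 0 < beta -> 0 < c -> 0 <= K1 ->
  (forall n L : nat, (1 <= n)%N -> (N <= L)%N ->
      c * expR (- beta * ln n%:R) <= L%:R * p n + K1 * expR (- a * L%:R)) ->
  exists c', 0 < c' /\ exists N' : nat, forall n : nat, (N' <= n)%N ->
      c' * (ln n%:R)^-1 * expR (- beta * ln n%:R) <= p n.
Proof.
move=> a0 b0 c0 K0 H.
pose C := (beta + 1) / a.
have C0 : 0 < C by rewrite divr_gt0 // addr_gt0.
pose D := N%:R + 1 + C.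
have D0 : 0 < D by rewrite addr_gt0 // addr_ge0.
exists (c / (2 * D)); split; first by rewrite divr_gt0 // mulr_gt0.
exists (maxn (Num.truncn (expR 1 : R)).+1 (Num.truncn (2 * K1 / c)).+1).
move=> n; rewrite geq_max => /andP[n1 n2].
have ngt1 := nat_gt_of _ _ _ n1.
have ngt2 := nat_gt_of _ _ _ n2.
have n0 : 0 < n%:R :> R by apply: lt_trans ngt1; exact: expR_gt0.
have npos : (1 <= n)%N by rewrite -(ltr0n R).
pose x := ln (n%:R : R).
have x1 : 1 < x.
  by rewrite /x -[X in X < _](expRK 1) ltr_ln ?posrE ?expR_gt0.
pose L := maxn N (Num.truncn (C * x)).+1.
have := H n L npos (leq_maxl _ _).
have LgtCx : C * x < L%:R by apply: nat_gt_of; rewrite leq_maxr.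
have Lle : L%:R <= D * x.
  have h1 : (L <= N + (Num.truncn (C * x)).+1)%N.
    by rewrite geq_max leq_addr leq_addl.
  have h2 : (Num.truncn (C * x))%:R <= C * x.
    by rewrite truncn_le mulr_ge0 // ?ltW // (lt_trans ltr01 x1).
  apply: le_trans (_ : N%:R + ((Num.truncn (C * x))%:R + 1) <= _).
    by rewrite natr1 -natrD ler_nat.
  have N0 : 0 <= N%:R :> R by [].
  rewrite /D; nra.
pose E := expR (- beta * x).
have E0 : 0 < E by exact: expR_gt0.
have tailb : K1 * expR (- a * L%:R) <= c / 2 * E.
  have e1 : expR (- a * L%:R) <= E / n%:R.
    rewrite /E -[n%:R](lnK) ?posrE // -expRN -expRD.
    rewrite ler_expR.
    have aC : a * C = beta + 1 by rewrite /C mulrCA divff ?mulr1 // gt_eqF.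
    rewrite -/x; nra.
  apply: le_trans (ler_wpM2l K0 e1) _.
  have : K1 <= c / 2 * n%:R.
    move: ngt2; rewrite ltr_pdivrMr // => h.
    rewrite mulrAC ler_pdivlMr // (mulrC c); lra.
  move=> h; have h2 : K1 / n%:R <= c / 2 by rewrite ler_pdivrMr.
  rewrite mulrCA (mulrC (c / 2)); by rewrite ler_pM2l.
move=> main; rewrite -/x -/E in main.
have Lpos : 0 < L%:R :> R by apply: le_lt_trans LgtCx; rewrite mulr_ge0 // ?ltW // (lt_trans ltr01 x1).
have hL : c / 2 * E <= L%:R * p n by nra.
have pge : 0 <= p n.
  have : 0 < L%:R * p n by apply: lt_le_trans hL; rewrite mulr_gt0 // divr_gt0.
  by rewrite pmulr_rgt0 // => /ltW.
have x0 : 0 < x by apply: lt_trans x1.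
change (c / (2 * D) / x * E <= p n).
have Dn : D != 0 by rewrite gt_eqF.
have xn : x != 0 by rewrite gt_eqF.
have eq : c / (2 * D) / x * E = (c / 2 * E) / (D * x).
  by field; rewrite xn Dn.
rewrite eq; apply: (@le_trans _ _ ((c / 2 * E) / L%:R)).
  rewrite ler_pM2l ?mulr_gt0 ?divr_gt0 // lef_pV2 ?posrE ?mulr_gt0 //.
by rewrite ler_pdivrMr // (mulrC (p n)).
Qed.
Lemma glob_lower (R : realType) (z c1 : R) (N0 : nat) (p : nat -> R) :
  0 <= z -> 0 < c1 ->
  (forall n n', (n <= n')%N -> p n' <= p n) ->
  (forall n, (N0 <= n)%N -> c1 * expR (- z * ln n%:R) <= p n) ->
  exists c', 0 < c' /\ forall n, (1 <= n)%N -> c' * expR (- z * ln n%:R) <= p n.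
Proof.
move=> z0 c10 anti H.
pose M0 := maxn N0 1.
have lnM : 0 <= ln (M0%:R : R) by rewrite ln_ge0 // ler1n leq_maxr.
exists (c1 * expR (- z * ln M0%:R)); split; first by rewrite mulr_gt0 // expR_gt0.
move=> n n1.
have lnn : 0 <= ln (n%:R : R) by rewrite ln_ge0 // ler1n.
have e1 : expR (- z * ln n%:R) <= 1 by rewrite -[X in _ <= X]expR0 ler_expR; nra.
have e2 : expR (- z * ln M0%:R) <= 1 by rewrite -[X in _ <= X]expR0 ler_expR; nra.
have E1 := expR_gt0 (- z * ln (n%:R : R)).
have E2 := expR_gt0 (- z * ln (M0%:R : R)).
have [nM|Mn] := leqP M0 n.
  apply: le_trans (H n (leq_trans (leq_maxl _ _) nM)).
  rewrite -mulrA ler_pM2l // mulrC; rewrite ler_piMr //; exact: ltW.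
apply: le_trans (anti n M0 (ltnW Mn)).
apply: le_trans (H M0 (leq_maxl _ _)).
rewrite ler_piMr // mulr_ge0 // ltW //.
Qed.

Lemma pure_d (R : realType) (beta eps c K2 : R) (N k : nat) (p : nat -> R) :
  0 < beta -> 0 < eps -> 0 < c -> 0 <= K2 ->
  beta + 1 <= eps * (k.-1)%:R ->
  (forall n n', (n <= n')%N -> p n' <= p n) ->
  (forall n L : nat, (1 <= n)%N -> (maxn N 1 <= L)%N ->
      c * expR (- beta * ln n%:R) <= L%:R * p n + K2 / L%:R ^+ k.-1) ->
  exists c', 0 < c' /\ forall n : nat, (1 <= n)%N ->
      c' * expR (- (beta + eps) * ln n%:R) <= p n.
Proof.
move=> b0 e0 c0 K0 hk anti H.
pose G := N%:R + 3 : R.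
have G0 : 0 < G by have := ler0n R N; rewrite /G; lra.
have z0 : 0 <= beta + eps by rewrite addr_ge0 // ltW.
have c10 : 0 < c / (2 * G) by rewrite divr_gt0 // mulr_gt0.
apply: (@glob_lower _ _ (c / (2 * G)) (maxn 1 (Num.truncn (2 * K2 / c)).+1) _ z0 c10 anti).
move=> n; rewrite geq_max => /andP[n1 n2].
have ngt2 := nat_gt_of _ _ _ n2.
have n0 : 0 < n%:R :> R by rewrite ltr0n.
pose x := ln (n%:R : R).
have x0 : 0 <= x by rewrite ln_ge0 // ler1n.
pose y := expR (eps * x).
have y1 : 1 <= y by rewrite -[X in X <= _]expR0 ler_expR mulr_ge0 // ltW.
pose L := maxn (maxn N 1) (Num.truncn y).+1.
have := H n L n1 (leq_maxl _ _).
have Lgty : y < L%:R by apply: nat_gt_of; rewrite leq_maxr.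
have LleG : L%:R <= G * y.
  have h1 : (L <= (N + 1) + (Num.truncn y).+1)%N.
    rewrite /L; lia.
  have h2 : (Num.truncn y)%:R <= y by rewrite truncn_le ltW // (lt_le_trans ltr01 y1).
  apply: le_trans (_ : ((N + 1) + (Num.truncn y).+1)%:R <= _); first by rewrite ler_nat.
  rewrite -addn1 !natrD mulr1n.
  have N0 : 0 <= N%:R :> R by [].
  rewrite /G; nra.
pose E := expR (- beta * x).
have E0 : 0 < E by exact: expR_gt0.
have Lpos : 0 < L%:R :> R by apply: lt_trans Lgty; exact: lt_le_trans ltr01 y1.
have tailb : K2 / L%:R ^+ k.-1 <= c / 2 * E.
  have e1 : (L%:R ^+ k.-1)^-1 <= E / n%:R.
    have : y ^+ k.-1 <= L%:R ^+ k.-1.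
      by rewrite lerXn2r ?nnegrE // ?ltW // (lt_le_trans ltr01 y1).
    rewrite /y -expRM_natr => hy.
    apply: le_trans (_ : (expR (eps * x * (k.-1)%:R))^-1 <= _).
      by rewrite lef_pV2 ?posrE ?exprn_gt0 ?expR_gt0.
    rewrite -expRN /E -[n%:R](lnK) ?posrE // -expRN -expRD ler_expR -/x.
    nra.
  apply: le_trans (ler_wpM2l K0 e1) _.
  have h2 : K2 / n%:R <= c / 2.
    move: ngt2; rewrite ltr_pdivrMr // => h.
    rewrite ler_pdivrMr // mulrAC ler_pdivlMr // (mulrC c); lra.
  rewrite mulrCA (mulrC (c / 2)); by rewrite ler_pM2l.
move=> main; rewrite -/x -/E in main.
have hL : c / 2 * E <= L%:R * p n by lra.
have pge : 0 <= p n.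
  have : 0 < L%:R * p n by apply: lt_le_trans hL; rewrite mulr_gt0 // divr_gt0.
  by rewrite pmulr_rgt0 // => /ltW.
have eE : expR (- (beta + eps) * ln n%:R) = E / y.
  by rewrite /E /y -expRN -expRD -/x; congr expR; lra.
rewrite eE.
have y0 : 0 < y by exact: lt_le_trans ltr01 y1.
have Gn : G != 0 by rewrite gt_eqF.
have yn : y != 0 by rewrite gt_eqF.
have eq : c / (2 * G) * (E / y) = (c / 2 * E) / (G * y).
  by field; rewrite yn Gn.
rewrite eq; apply: (@le_trans _ _ ((c / 2 * E) / L%:R)).
  rewrite ler_pM2l ?mulr_gt0 ?divr_gt0 // lef_pV2 ?posrE ?mulr_gt0 //.
by rewrite ler_pdivrMr // (mulrC (p n)).
Qed.
Lemma expR_ge_of (R : realType) (u : R) (T : R) : 0 < T -> ln T <= u -> T <= expR u.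
Proof. by move=> T0 h; rewrite -[T](lnK) ?posrE // ler_expR. Qed.

Lemma pure_c (R : realType) (beta eps S K0 KH : R) (N Nh k : nat) (p : nat -> R) :
  0 < beta -> 0 < eps -> 0 <= S -> 0 <= K0 -> 0 <= KH ->
  beta * beta <= eps * k%:R ->
  (forall n L : nat, (0 < L)%N -> (N <= L)%N -> (maxn Nh 1 <= n %/ L)%N ->
      p n <= K0 / L%:R ^+ k + S * (KH * expR (- beta * ln (n %/ L)%:R))) ->
  exists (K' : R) (N' : nat), forall n, (N' <= n)%N ->
      p n <= K' * expR (- (beta - eps) * ln n%:R).
Proof.
move=> b0 e0 S0 K00 KH0 hk H.
pose de := eps / (beta + eps).
have be0 : 0 < beta + eps by rewrite addr_gt0.
have de0 : 0 < de by rewrite divr_gt0.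
have de1 : 1 - de = beta / (beta + eps).
  by rewrite /de; field; rewrite gt_eqF.
have de1p : 0 < 1 - de by rewrite de1 divr_gt0.
pose A1 := ln (N%:R + 1 : R).
pose A2 := ln (6 * (Nh%:R + 1) : R).
have N0 : 0 <= N%:R :> R by [].
have Nh0 : 0 <= Nh%:R :> R by [].
have A10 : 0 <= A1 by rewrite ln_ge0 //; lra.
have A20 : 0 <= A2 by rewrite ln_ge0 //; nra.
pose X0 := A1 / de + A2 / (1 - de).
exists (K0 + S * KH * expR (beta * ln 3)), (Num.truncn (expR X0)).+1.
move=> n nN.
have ngt := nat_gt_of _ _ _ nN.
have n0 : 0 < n%:R :> R by apply: lt_trans ngt; exact: expR_gt0.
pose x := ln (n%:R : R).
have xX : X0 < x by rewrite /x -(expRK X0) ltr_ln ?posrE ?expR_gt0.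
have X00 : 0 <= X0 by rewrite addr_ge0 // divr_ge0 // ltW.
have x0 : 0 <= x by apply: le_trans X00 (ltW xX).
pose y := expR (de * x).
pose z := expR ((1 - de) * x).
have nyz : n%:R = y * z.
  by rewrite /y /z -expRD -mulrDl addrC subrK mul1r /x lnK ?posrE.
have dex : A1 <= de * x.
  have : A1 / de <= x by apply: le_trans (ltW xX); rewrite /X0 lerDl divr_ge0 // ltW.
  by rewrite ler_pdivrMr // mulrC.
have dex2 : A2 <= (1 - de) * x.
  have : A2 / (1 - de) <= x by apply: le_trans (ltW xX); rewrite /X0 lerDr divr_ge0 // ltW.
  by rewrite ler_pdivrMr // mulrC.
have yN : N%:R + 1 <= y by apply: expR_ge_of => //; lra.
have zN : 6 * (Nh%:R + 1) <= z by apply: expR_ge_of => //; nra.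
have y0 : 0 < y by exact: expR_gt0.
have z0 : 0 < z by exact: expR_gt0.
pose L := (Num.truncn y).+1.
have Lgty : y < L%:R by exact: truncnS_gt.
have Lley : L%:R <= y + 1.
  by rewrite /L -natr1 lerD2r truncn_le ltW.
have L0 : (0 < L)%N by [].
have NL : (N <= L)%N by rewrite -(ler_nat R); lra.
pose m := (n %/ L)%N.
have nm : (n < m.+1 * L)%N by exact: ltn_ceil.
have nmR : n%:R < m.+1%:R * L%:R :> R by rewrite -natrM ltr_nat.
have mz : z / 3 < m%:R.
  have h1 : y * z < (m%:R + 1) * (2 * y).
    rewrite -nyz; apply: lt_le_trans nmR _; rewrite -natr1.
    rewrite ler_pM2l ?ltr_wpDl //; lra.
  have h2 : z < 2 * (m%:R + 1).
    have : y * z < y * (2 * (m%:R + 1)) by nra.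
    by rewrite ltr_pM2l.
  lra.
have mNh : (maxn Nh 1 <= m)%N.
  rewrite geq_max; apply/andP; split; [rewrite -(ler_nat R) | rewrite -(ltr_nat R 0)]; lra.
have := H n L L0 NL mNh.
rewrite -/m => hp.
pose e := expR (- (beta - eps) * x).
have epos : 0 < e by exact: expR_gt0.
have dk : beta - eps <= de * k%:R.
  rewrite /de mulrAC ler_pdivlMr //; nra.
have t1 : K0 / L%:R ^+ k <= K0 * e.
  apply: (ler_wpM2l K00).
  have Lp : 0 < L%:R :> R by [].
  have : y ^+ k <= L%:R ^+ k by rewrite lerXn2r ?nnegrE ?ltW.
  rewrite /y -expRM_natr => hy.
  apply: le_trans (_ : (expR (de * x * k%:R))^-1 <= _).
    by rewrite lef_pV2 ?posrE ?exprn_gt0 ?expR_gt0.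
  rewrite -expRN /e ler_expR; nra.
have t2 : expR (- beta * ln m%:R) <= expR (beta * ln 3) * e.
  have m0 : 0 < m%:R :> R by apply: le_lt_trans mz; rewrite divr_ge0 // ltW.
  have lz : ln (z / 3) = (1 - de) * x - ln 3.
    by rewrite lnM ?posrE ?invr_gt0 // lnV ?posrE // /z expRK.
  have lm : ln (z / 3) <= ln m%:R.
    by rewrite ler_ln ?posrE ?divr_gt0 // ltW.
  have bde : beta - eps <= beta * (1 - de).
    rewrite de1 mulrA ler_pdivlMr //; nra.
  rewrite /e -expRD ler_expR; nra.
apply: le_trans hp _.
rewrite !mulrDl; apply: lerD => //.
rewrite -!mulrA; apply: (ler_wpM2l S0); apply: (ler_wpM2l KH0); exact: t2.
Qed.
Lemma poly_tele (R : realType) (K0 : R) (j L l : nat) :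
  0 <= K0 -> (1 <= L)%N -> (L <= l)%N ->
  K0 / l%:R ^+ j.+3 <=
  2 * K0 / (L%:R ^+ j.+1 * l%:R) - 2 * K0 / (L%:R ^+ j.+1 * l.+1%:R).
Proof.
move=> K00 L1 Ll.
have l1 : (1 <= l)%N by exact: leq_trans L1 Ll.
have lR : 1 <= l%:R :> R by rewrite ler1n.
have LR : 0 < L%:R :> R by rewrite ltr0n.
pose A := L%:R ^+ j.+1 : R.
pose B := l%:R ^+ j.+1 : R.
have A0 : 0 < A by rewrite exprn_gt0.
have AB : A <= B by rewrite lerXn2r ?nnegrE ?ler_nat // ltW.
have l0 : 0 < l%:R :> R by lra.
have eq1 : 2 * K0 / (A * l%:R) - 2 * K0 / (A * l.+1%:R) =
    K0 * (A * l%:R * (l%:R + 1) / 2)^-1.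
  rewrite -natr1; field.
  by rewrite !gt_eqF //; lra.
rewrite -/A eq1; apply: (ler_wpM2l K00).
have e3 : l%:R ^+ j.+3 = B * l%:R * l%:R by rewrite /B !exprS; ring.
rewrite e3 lef_pV2 ?posrE ?mulr_gt0 ?divr_gt0 ?addr_gt0 //; last by lra.
have lm1 : 0 <= l%:R - 1 :> R by lra.
have h1 := mulr_ge0 (mulr_ge0 (ltW A0) (ltW l0)) lm1.
have h2 : A * l%:R * l%:R <= B * l%:R * l%:R.
  by rewrite ler_wpM2r ?ler_wpM2r // ltW.
nra.
Qed.
Lemma part_b (R : realType) (beta : R) (hbeta : 0 < beta) :
  (forall (d : measure_display) (M : measurableType d) (mu : probability M R)
          (f : M -> M) (X Y : set M) (h : M -> nat) (alpha : set (set M))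
          (sigma : M -> nat) (muY : probability M R),
     CMZ mu f X Y h alpha sigma muY ->
     (exists a : R, 0 < a /\ exists (K : R) (N : nat), forall n, (N <= n)%N ->
        (muY [set y | Y y /\ (n < sigma y)%N] <= (K * expR (- (a * n%:R)))%:E)%E) ->
     (exists c : R, 0 < c /\ forall n, (1 <= n)%N ->
        ((c * n%:R `^ (- beta))%:E <= cond_measure mu X [set x | (n < h x)%N])%E) ->
     exists c' : R, 0 < c' /\ exists N : nat, forall n, (N <= n)%N ->
        ((c' * (ln n%:R)^-1 * n%:R `^ (- beta))%:E <=
           muY [set y | Y y /\ (n < induced_return_time f h sigma y)%N])%E).
Proof.
move=> d M mu f X Y h alpha sigma muY HC [a [a0 [K [N tail]]]] [c [c0 hc]].
pose p := fun n => fine (muY (Pset f Y h sigma n)).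
pose K0 := `|K|.
pose r := expR (- a).
have r1 : r < 1 by rewrite /r expR_lt1 oppr_lt0.
pose K1 := K0 / (1 - r).
have K00 : 0 <= K0 by rewrite /K0 normr_ge0.
have K10 : 0 <= K1 by rewrite /K1 divr_ge0 // subr_ge0 ltW.
have H : forall n L : nat, (1 <= n)%N -> (N <= L)%N ->
    c * expR (- beta * ln n%:R) <= L%:R * p n + K1 * expR (- a * L%:R).
  move=> n L n1 NL.
  have n0 : 0 < n%:R :> R by rewrite ltr0n.
  rewrite /p; apply: (@LBr _ _ _ _ _ _ _ _ _ _ _ HC).
  - apply: (@tail_tele _ _ (fun l => K1 * expR (- a * l%:R))) => l Ll; last first.
      by rewrite mulr_ge0 // ltW // expR_gt0.
    split; first exact: measure_ge0.
    apply: le_trans (tail l (leq_trans NL Ll)) _; rewrite lee_fin.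
    have -> : K1 * expR (- a * l%:R) - K1 * expR (- a * l.+1%:R) = K0 * expR (- a * l%:R).
      rewrite -natr1 mulrDr mulr1 expRD -/r /K1; field.
      by rewrite subr_eq0 gt_eqF.
    rewrite mulNr; apply: ler_wpM2r; [exact: ltW (expR_gt0 _) | exact: ler_norm].
  - by rewrite mulr_ge0 // ltW // expR_gt0.
  - by have := hc n n1; rewrite powRE.
have [c' [c'0 [N' HN]]] := @pure_b _ a beta c K1 N p a0 hbeta c0 K10 H.
exists c'; split => //; exists (maxn N' 1) => n; rewrite geq_max => /andP[nN n1].
rewrite powRE ?ltr0n //.
change ((c' * (ln n%:R)^-1 * expR (- beta * ln n%:R))%:E <= muY (Pset f Y h sigma n))%E.
by rewrite -(fineK (@P_fin _ _ _ _ _ _ _ _ _ _ _ HC n)) lee_fin; exact: HN.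
Qed.
Lemma part_cd (R : realType) (beta : R) (hbeta : 0 < beta) :
  (forall eps : R, 0 < eps -> exists q : R, 1 < q /\
    forall (d : measure_display) (M : measurableType d) (mu : probability M R)
           (f : M -> M) (X Y : set M) (h : M -> nat) (alpha : set (set M))
           (sigma : M -> nat) (muY : probability M R),
     CMZ mu f X Y h alpha sigma muY ->
     (exists (K : R) (N : nat), forall n, (N <= n)%N ->
        (muY [set y | Y y /\ (n < sigma y)%N] <= (K * n%:R `^ (- q))%:E)%E) ->
     ((exists (K : R) (N : nat), forall n, (N <= n)%N ->
        (cond_measure mu X [set x | (n < h x)%N] <= (K * n%:R `^ (- beta))%:E)%E) ->
      exists (K' : R) (N' : nat), forall n, (N' <= n)%N ->
        (muY [set y | Y y /\ (n < induced_return_time f h sigma y)%N]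
           <= (K' * n%:R `^ (- (beta - eps)))%:E)%E)
     /\
     ((exists c : R, 0 < c /\ forall n, (1 <= n)%N ->
        ((c * n%:R `^ (- beta))%:E <= cond_measure mu X [set x | (n < h x)%N])%E) ->
      exists c' : R, 0 < c' /\ forall n, (1 <= n)%N ->
        ((c' * n%:R `^ (- (beta + eps)))%:E <=
           muY [set y | Y y /\ (n < induced_return_time f h sigma y)%N])%E)).
Proof.
move=> eps eps0.
pose T := (beta + 1) / eps + beta * beta / eps.
have T1 : 0 <= (beta + 1) / eps by rewrite divr_ge0 // ltW // addr_gt0.
have T2 : 0 <= beta * beta / eps by rewrite divr_ge0 // ?mulr_ge0 // ltW.
have T0 : 0 <= T by rewrite addr_ge0.
pose j := Num.truncn T.
have Tj : T < j.+1%:R by exact: truncnS_gt.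
have jj : (j.+1%:R : R) <= j.+2%:R by rewrite ler_nat.
have jk : (j.+2%:R : R) <= j.+3%:R by rewrite ler_nat.
have hk1 : beta + 1 <= eps * (j.+3).-1%:R.
  have hT1 : (beta + 1) / eps <= T by rewrite /T lerDl.
  have : (beta + 1) / eps <= j.+2%:R by apply: le_trans hT1 _; lra.
  by rewrite ler_pdivrMr // (mulrC eps).
have hk2 : beta * beta <= eps * j.+3%:R.
  have hT2 : beta * beta / eps <= T by rewrite /T lerDr.
  have : beta * beta / eps <= j.+3%:R by apply: le_trans hT2 _; lra.
  by rewrite ler_pdivrMr // (mulrC eps).
exists (j.+3)%:R; split; first by rewrite ltr1n.
move=> d M mu f X Y h alpha sigma muY HC [K [N tail]].
pose p := fun n => fine (muY (Pset f Y h sigma n)).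
pose K0 := `|K|.
have K00 : 0 <= K0 by rewrite /K0 normr_ge0.
have tailK : forall n, (maxn N 1 <= n)%N ->
    (muY (Sig Y sigma n) <= (K0 / n%:R ^+ j.+3)%:E)%E.
  move=> n; rewrite geq_max => /andP[Nn n1].
  apply: le_trans (tail n Nn) _.
  rewrite powR_invn ?ler0n // lee_fin; apply: ler_wpM2r; last exact: ler_norm.
  by rewrite invr_ge0 exprn_ge0.
have s_ge0 : 0 <= fine (\int[muY]_(y in Y) ((sigma y)%:R)%:E)%E.
  by apply: fine_ge0; apply: le_trans (@s_ge1 _ _ _ _ _ _ _ _ _ _ _ HC); rewrite lee_fin.
split.
- move=> [Kh [Nh hh]].
  pose KH := `|Kh|.
  have KH0 : 0 <= KH by rewrite /KH normr_ge0.
  have := @pure_c R beta eps _ K0 KH (maxn N 1) Nh j.+3 p hbeta eps0 s_ge0 K00 KH0 hk2.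
  case.
    move=> n L L0 NL mN.
    have m1 : (1 <= n %/ L)%N by apply: leq_trans mN; rewrite leq_maxr.
    apply: le_trans (@UBr _ _ _ _ _ _ _ _ _ _ _ HC n L (KH * expR (- beta * ln (n %/ L)%:R)) L0 _) _.
      apply: le_trans (hh _ (leq_trans (leq_maxl _ _) mN)) _.
      rewrite lee_fin powRE ?ltr0n //; apply: ler_wpM2r; last exact: ler_norm.
      exact: ltW (expR_gt0 _).
    rewrite lerD2r.
    rewrite -lee_fin fineK; last exact: (@Sig_fin _ _ _ _ _ _ _ _ _ _ _ HC).
    exact: tailK.
  move=> K' [N' HN].
  exists K', (maxn N' 1) => n; rewrite geq_max => /andP[nN n1].
  rewrite powRE ?ltr0n //.
  change (muY (Pset f Y h sigma n) <= (K' * expR (- (beta - eps) * ln n%:R))%:E)%E.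
  by rewrite -(fineK (@P_fin _ _ _ _ _ _ _ _ _ _ _ HC n)) lee_fin; exact: HN.
- move=> [c [c0 hc]].
  have K20 : 0 <= 2 * K0 by rewrite mulr_ge0.
  have anti : forall n n', (n <= n')%N -> p n' <= p n.
    by move=> n n' nn; exact: (@p_anti _ _ _ _ _ _ _ _ _ _ _ HC n n' nn).
  have := @pure_d R beta eps c (2 * K0) N j.+3 p hbeta eps0 c0 K20 hk1 anti.
  case.
    move=> n L n1 NL.
    have L1 : (1 <= L)%N by apply: leq_trans NL; rewrite leq_maxr.
    have n0 : 0 < n%:R :> R by rewrite ltr0n.
    rewrite /p; apply: (@LBr _ _ _ _ _ _ _ _ _ _ _ HC).
    + apply: le_trans (@tail_tele _ _ (fun l => 2 * K0 / (L%:R ^+ j.+1 * l%:R)) L _ _) _.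
      * move=> l Ll; split; first exact: measure_ge0.
        apply: le_trans (tailK l (leq_trans NL Ll)) _; rewrite lee_fin.
        exact: poly_tele.
      * move=> l Ll; rewrite divr_ge0 // mulr_ge0 // exprn_ge0 //.
      * by rewrite lee_fin -exprSr.
    + by rewrite mulr_ge0 // ltW // expR_gt0.
    + by have := hc n n1; rewrite powRE.
  move=> c' [c'0 Hc]; exists c'; split => // n n1.
  rewrite powRE ?ltr0n //.
  change ((c' * expR (- (beta + eps) * ln n%:R))%:E <= muY (Pset f Y h sigma n))%E.
  by rewrite -(fineK (@P_fin _ _ _ _ _ _ _ _ _ _ _ HC n)) lee_fin; exact: Hc.
Qed.
Theorem proposition5p1 (R : realType) (beta : R) (hbeta : 0 < beta) :
  (* (b) *)
  (forall (d : measure_display) (M : measurableType d) (mu : probability M R)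
          (f : M -> M) (X Y : set M) (h : M -> nat) (alpha : set (set M))
          (sigma : M -> nat) (muY : probability M R),
     CMZ mu f X Y h alpha sigma muY ->
     (exists a : R, 0 < a /\ exists (K : R) (N : nat), forall n, (N <= n)%N ->
        (muY [set y | Y y /\ (n < sigma y)%N] <= (K * expR (- (a * n%:R)))%:E)%E) ->
     (exists c : R, 0 < c /\ forall n, (1 <= n)%N ->
        ((c * n%:R `^ (- beta))%:E <= cond_measure mu X [set x | (n < h x)%N])%E) ->
     exists c' : R, 0 < c' /\ exists N : nat, forall n, (N <= n)%N ->
        ((c' * (ln n%:R)^-1 * n%:R `^ (- beta))%:E <=
           muY [set y | Y y /\ (n < induced_return_time f h sigma y)%N])%E)
  /\
  (forall eps : R, 0 < eps -> exists q : R, 1 < q /\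
    forall (d : measure_display) (M : measurableType d) (mu : probability M R)
           (f : M -> M) (X Y : set M) (h : M -> nat) (alpha : set (set M))
           (sigma : M -> nat) (muY : probability M R),
     CMZ mu f X Y h alpha sigma muY ->
     (exists (K : R) (N : nat), forall n, (N <= n)%N ->
        (muY [set y | Y y /\ (n < sigma y)%N] <= (K * n%:R `^ (- q))%:E)%E) ->
     (* (c) *)
     ((exists (K : R) (N : nat), forall n, (N <= n)%N ->
        (cond_measure mu X [set x | (n < h x)%N] <= (K * n%:R `^ (- beta))%:E)%E) ->
      exists (K' : R) (N' : nat), forall n, (N' <= n)%N ->
        (muY [set y | Y y /\ (n < induced_return_time f h sigma y)%N]
           <= (K' * n%:R `^ (- (beta - eps)))%:E)%E)
     /\
     (* (d) *)
     ((exists c : R, 0 < c /\ forall n, (1 <= n)%N ->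
        ((c * n%:R `^ (- beta))%:E <= cond_measure mu X [set x | (n < h x)%N])%E) ->
      exists c' : R, 0 < c' /\ forall n, (1 <= n)%N ->
        ((c' * n%:R `^ (- (beta + eps)))%:E <=
           muY [set y | Y y /\ (n < induced_return_time f h sigma y)%N])%E)).
Proof.
split; [exact: part_b | exact: part_cd].
Qed.
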